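(* Let $n\ge 3$ be an integer and let $P_1,\dots,P_n\in\mathbb{R}^2$ be the vertices, labelled counter-clockwise, of a convex regular polygon with $n$ edges, positioned so that $P_1$ lies on the line $\{y=0\}$ and every other vertex satisfies $\overrightarrow{OP_i}\cdot\vec e_2>0$, where $O$ is the origin and $\vec e_2=(0,1)^T$. Indices are taken modulo $n$ (so $P_{n+1}=P_1$). Let $k>0$ and $\kappa>0$ be constants and set $$C:=\frac{|\overrightarrow{P_iP_{i+1}}\times\overrightarrow{P_{i-1}P_i}|}{|\overrightarrow{P_iP_{i+1}}|^2\,|\overrightarrow{P_{i-1}P_i}|^2},$$ which is independent of $i$. For $\bm V=(\vec v_2,\dots,\vec v_n)\in\mathbb{R}^{2n-2}$ (each $\vec v_i\in\mathbb{R}^2$) put $\vec v_1=\vec v_{n+1}=(0,0)^T$ and define $$J_s(\bm V)=\frac{k}{2}\sum_{i=1}^{n}|\vec v_{i+1}-\vec v_i|^2,$$ $$J_b(\bm V)=\frac{\kappa C^2}{2}\sum_{i=2}^{n}\Big|\overrightarrow{P_{i-1}P_i}\cdot\vec v_{i+1}+\big(\overrightarrow{P_iP_{i+1}}-\overrightarrow{P_{i-1}P_i}\big)\cdot\vec v_i-\overrightarrow{P_iP_{i+1}}\cdot\vec v_{i-1}\Big|^2,$$ and $J=J_s+J_b$. Let $$\mathcal U:=\Big\{\bm V=(\vec v_i)_{i=2}^n\in\mathbb{R}^{2n-2}:\ (\overrightarrow{OP_i}+\vec v_i)\cdot\vec e_2\ge 0\ \text{ for all } 2\le i\le n\Big\}.$$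 Then for every $\bm F\in\mathbb{R}^{2n-2}$ the minimization problem $$\inf_{\bm V\in\mathcal U}\big(J(\bm V)-\bm F^T\bm V\big)$$ admits a unique minimizer $\bm U\in\mathcal U$. Equivalently, writing $J(\bm V)=\tfrac12\bm V^T\mathcal A\bm V$ with $\mathcal A$ the symmetric $(2n-2)\times(2n-2)$ matrix of the quadratic form $J$, there exists a unique $\bm U\in\mathcal U$ such that $$(\mathcal A\bm U)\cdot(\bm V-\bm U)\ge \bm F\cdot(\bm V-\bm U)\quad\text{for all }\bm V\in\mathcal U.$$
   Context: This is a discrete model for the linearized deformation of a regular polygon (vertex $P_1$ clamped, i.e. undergoing zero displacement) that is not allowed to cross the rigid flat line $\{y=0\}$ on which it initially touches only at $P_1$. $\bm V$ collects the displacements $\vec v_i$ of the vertices $P_i$, $2\le i\le n$; $J_s$ is the stretching energy of the edges and $J_b$ is the linearized bending energy associated with changes of the angles between consecutive edges. $\bm F=(\vec f_i)_{i=2}^n$ is the array of applied forces on the vertices $P_2,\dots,P_n$. For vectors $a,b\in\mathbb{R}^2$, $a\cdot b$ is the Euclidean inner product and $|a\times b|$ is the absolute value of the scalar cross product $a_1b_2-a_2b_1$. *)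

(* Defs.v *)
From mathcomp Require Import all_boot all_order all_algebra.
From mathcomp Require Import reals trigo.
Set Implicit Arguments. Unset Strict Implicit. Unset Printing Implicit Defensive.
Import Order.TTheory GRing.Theory Num.Theory.
Local Open Scope ring_scope.

Section Defs.
Variable R : realType.

Definition vadd (a b : R * R) : R * R := (a.1 + b.1, a.2 + b.2).
Definition vsub (a b : R * R) : R * R := (a.1 - b.1, a.2 - b.2).
Definition dot (a b : R * R) : R := a.1 * b.1 + a.2 * b.2.
Definition cross (a b : R * R) : R := a.1 * b.2 - a.2 * b.1.
Definition nrm2 (a : R * R) : R := dot a a.

(* Vertex P_i (1-based, i >= 1) of the regular convex n-gon with center c,
   circumradius r and angular offset th, labelled counter-clockwise:
   P_i = c + r (cos(th + 2 pi (i-1)/n), sin(th + 2 pi (i-1)/n)).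
   The formula is n-periodic in i, so P_{n+1} = P_1. *)
Definition vtx (n : nat) (c : R * R) (r th : R) (i : nat) : R * R :=
  let a := th + 2 * pi * (i.-1)%:R / n%:R in
  (c.1 + r * cos a, c.2 + r * sin a).

Definition edge n c r th (i : nat) : R * R :=
  vsub (vtx n c r th i) (vtx n c r th i.-1).

(* C, computed at i = 2 (independent of i by regularity) *)
Definition Cconst n c r th : R :=
  `|cross (edge n c r th 3) (edge n c r th 2)|
    / (nrm2 (edge n c r th 3) * nrm2 (edge n c r th 2)).

(* displacements: V indexes v_2, ..., v_n by j : 'I_(n-1), v_(j+2) = V j *)
Definition disp (n : nat) := {ffun 'I_n.-1 -> R * R}.

(* v_i for 1 <= i <= n+1, with v_1 = v_{n+1} = 0 *)
Definition vfull (n : nat) (V : disp n) (i : nat) : R * R :=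
  match insub (i - 2)%N with
  | Some j => if (2 <= i)%N then V j else (0, 0)
  | None => (0, 0)
  end.

Definition Js (n : nat) (k : R) (V : disp n) : R :=
  k / 2 * \sum_(1 <= i < n.+1) nrm2 (vsub (vfull V i.+1) (vfull V i)).

Definition Jb (n : nat) c r th (kappa : R) (V : disp n) : R :=
  kappa * (Cconst n c r th) ^+ 2 / 2 *
  \sum_(2 <= i < n.+1)
    (dot (edge n c r th i) (vfull V i.+1)
     + dot (vsub (edge n c r th i.+1) (edge n c r th i)) (vfull V i)
     - dot (edge n c r th i.+1) (vfull V i.-1)) ^+ 2.

Definition Jtot n c r th k kappa (V : disp n) : R :=
  Js k V + Jb c r th kappa V.

Definition pairing (n : nat) (F V : disp n) : R :=
  \sum_(j : 'I_n.-1) dot (F j) (V j).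

Definition admissible n c r th (V : disp n) : Prop :=
  forall i : nat, (2 <= i <= n)%N -> 0 <= (vadd (vtx n c r th i) (vfull V i)).2.

End Defs.

(* Main.v *)
Require Import Defs.
From mathcomp Require Import all_boot all_order all_algebra.
From mathcomp Require Import reals trigo.
From mathcomp Require Import all_classical all_analysis.
From mathcomp Require Import ring lra zify.
Import Order.TTheory GRing.Theory Num.Theory.
Import numFieldNormedType.Exports.
Local Open Scope ring_scope.

Section Cont.
Variable R : realType.
Variable T : topologicalType.

Lemma cD (f g : T -> R) : continuous f -> continuous g -> continuous (fun x => f x + g x).
Proof. by move=> hf hg x; apply: continuousD; [apply: hf|apply: hg]. Qed.
Lemma cB (f g : T -> R) : continuous f -> continuous g -> continuous (fun x => f x - g x).
Proof. by move=> hf hg x; apply: continuousB; [apply: hf|apply: hg]. Qed.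
Lemma cM (f g : T -> R) : continuous f -> continuous g -> continuous (fun x => f x * g x).
Proof. by move=> hf hg x; apply: continuousM; [apply: hf|apply: hg]. Qed.
Lemma cX (f : T -> R) : continuous f -> continuous (fun x => f x ^+ 2).
Proof. by move=> hf x; rewrite /GRing.exp /=; apply: continuousM; apply: hf. Qed.
Lemma cC (a : R) : continuous (fun _ : T => a).
Proof. exact: cst_continuous. Qed.
Lemma cS (I : Type) (r : seq I) (P : pred I) (F : I -> T -> R) :
  (forall i, continuous (F i)) -> continuous (fun x => \sum_(i <- r | P i) F i x).
Proof.
move=> hF; elim: r => [|a r IH].
  by under eq_fun do rewrite big_nil; exact: cC.
under eq_fun do rewrite big_cons.
case: (P a); last exact: IH.
exact: cD.
Qed.
End Cont.

Section Model.
Variable R : realType.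
Variables (n : nat) (c : R * R) (r th k kappa : R) (F : disp R n).

Lemma cN (T : topologicalType) (f : T -> R) : continuous f -> continuous (fun x => - f x).
Proof. by move=> hf x; apply: continuousN; apply: hf. Qed.

Definition toD (x : 'rV[R]_(n.-1 + n.-1)) : disp R n :=
  [ffun j => (x ord0 (lshift _ j), x ord0 (rshift _ j))].

Definition fobj (V : disp R n) := Jtot c r th k kappa V - pairing F V.

Lemma ct1 j : continuous (fun x => (toD x j).1).
Proof.
rewrite (_ : (fun x => _) = (fun x : 'rV[R]_(n.-1 + n.-1) => x ord0 (lshift _ j))).
  exact: coord_continuous.
by apply: funext => x; rewrite ffunE.
Qed.
Lemma ct2 j : continuous (fun x => (toD x j).2).
Proof.
rewrite (_ : (fun x => _) = (fun x : 'rV[R]_(n.-1 + n.-1) => x ord0 (rshift _ j))).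
  exact: coord_continuous.
by apply: funext => x; rewrite ffunE.
Qed.

Lemma cv1 i : continuous (fun x => (vfull (toD x) i).1).
Proof.
rewrite /vfull; case: insub => [j|]; last exact: cC.
case: (2 <= i)%N; last exact: cC.
exact: ct1.
Qed.
Lemma cv2 i : continuous (fun x => (vfull (toD x) i).2).
Proof.
rewrite /vfull; case: insub => [j|]; last exact: cC.
case: (2 <= i)%N; last exact: cC.
exact: ct2.
Qed.

Ltac dotc := apply: cD; (apply: cM; [exact: cC | first [exact: cv1 | exact: cv2 | exact: ct1 | exact: ct2]]).

Lemma cJs : continuous (fun x => Js k (toD x)).
Proof.
rewrite /Js; apply: cM; first exact: cC.
apply: cS => i; rewrite /nrm2 /dot /vsub /=.
by apply: cD; apply: cM; apply: cB; first [exact: cv1 | exact: cv2].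
Qed.

Lemma cJb : continuous (fun x => Jb c r th kappa (toD x)).
Proof.
rewrite /Jb; apply: cM; first exact: cC.
apply: cS => i; apply: cX; rewrite /dot.
apply: cB; first apply: cD.
all: try dotc.
Qed.

Lemma cpair : continuous (fun x => pairing F (toD x)).
Proof. rewrite /pairing; apply: cS => j; rewrite /dot; dotc. Qed.

Lemma cont_f : continuous (fun x => fobj (toD x)).
Proof.
rewrite /fobj /Jtot; apply: cB; [apply: cD; [exact: cJs | exact: cJb] | exact: cpair].
Qed.

Definition S (V : disp R n) := \sum_(1 <= i < n.+1) nrm2 (vsub (vfull V i.+1) (vfull V i)).

Lemma nrm2_ge0 (a : R * R) : 0 <= nrm2 a.
Proof. by rewrite /nrm2 /dot -!expr2 addr_ge0 ?sqr_ge0. Qed.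

Lemma S_ge0 (V : disp R n) : 0 <= S V.
Proof. by apply: sumr_ge0 => i _; apply: nrm2_ge0. Qed.

Lemma Jb_ge0 (V : disp R n) : 0 < kappa -> 0 <= Jb c r th kappa V.
Proof.
move=> hk; apply: mulr_ge0; first by apply: mulr_ge0 => //; apply: mulr_ge0; [exact: ltW|exact: sqr_ge0].
by apply: sumr_ge0 => i _; apply: sqr_ge0.
Qed.

Lemma vfull1 (V : disp R n) : vfull V 1 = (0, 0).
Proof. by rewrite /vfull; case: insub. Qed.

Lemma vfullj (V : disp R n) (j : 'I_n.-1) : vfull V j.+2 = V j.
Proof.
rewrite /vfull !subSS subn0; case: insubP => [u _ hu|]; last by rewrite ltn_ord.
by rewrite /=; congr (V _); apply: val_inj.
Qed.

Lemma coord_gen (p : R * R -> R) (V : disp R n) (j : 'I_n.-1) :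
  (forall a b, (p a - p b) ^+ 2 <= nrm2 (vsub a b)) -> p (0, 0) = 0 ->
  `|p (V j)| <= n%:R * Num.sqrt (S V).
Proof.
move=> Hp p0; set s := Num.sqrt (S V).
have Sge l : (1 <= l < n.+1)%N -> nrm2 (vsub (vfull V l.+1) (vfull V l)) <= S V.
  move=> hl; rewrite /S (bigD1_seq l) ?mem_index_iota ?iota_uniq //=.
  by rewrite lerDl; apply: sumr_ge0 => i _; apply: nrm2_ge0.
have hterm l : (1 <= l < n.+1)%N -> `|p (vfull V l.+1) - p (vfull V l)| <= s.
  move=> hl; rewrite -sqrtr_sqr; apply: ler_wsqrtr; exact: le_trans (Hp _ _) (Sge _ hl).
have -> : p (V j) = \sum_(1 <= l < j.+2) (p (vfull V l.+1) - p (vfull V l)).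
  by rewrite telescope_sumr // vfull1 p0 subr0 vfullj.
apply: le_trans (ler_norm_sum _ _ _) _.
apply: (@le_trans _ _ (\sum_(1 <= l < j.+2) s)).
  apply: ler_sum_nat => l /andP[hl1 hl2]; apply: hterm; rewrite hl1 /=.
  have := ltn_ord j; lia.
rewrite sumr_const_nat -[s *+ _]mulr_natl; apply: ler_wpM2r; [exact: sqrtr_ge0|].
rewrite ler_nat; have := ltn_ord j; lia.
Qed.

Lemma coord1 (V : disp R n) j : `|(V j).1| <= n%:R * Num.sqrt (S V).
Proof.
apply: (@coord_gen fst) => // a b.
by rewrite /nrm2 /dot /vsub /= -!expr2 lerDl sqr_ge0.
Qed.
Lemma coord2 (V : disp R n) j : `|(V j).2| <= n%:R * Num.sqrt (S V).
Proof.
apply: (@coord_gen snd) => // a b.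
by rewrite /nrm2 /dot /vsub /= -!expr2 lerDr sqr_ge0.
Qed.

Definition Phi := \sum_(j : 'I_n.-1) (`|(F j).1| + `|(F j).2|).

Lemma Phi_ge0 : 0 <= Phi.
Proof. by apply: sumr_ge0 => j _; apply: addr_ge0. Qed.

Lemma pairing_bound (V : disp R n) : pairing F V <= Phi * (n%:R * Num.sqrt (S V)).
Proof.
rewrite /pairing /Phi mulr_suml; apply: ler_sum => j _; rewrite /dot mulrDl.
apply: lerD.
  apply: le_trans (ler_norm _) _; rewrite normrM; apply: ler_wpM2l => //; exact: coord1.
apply: le_trans (ler_norm _) _; rewrite normrM; apply: ler_wpM2l => //; exact: coord2.
Qed.


Definition Mb := n%:R * (2 * Phi * n%:R / k).

Lemma box (V : disp R n) : 0 < k -> 0 < kappa -> fobj V <= 0 ->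
  forall j, `|(V j).1| <= Mb /\ `|(V j).2| <= Mb.
Proof.
move=> hk hka hf.
set s := Num.sqrt (S V).
have s0 : 0 <= s by exact: sqrtr_ge0.
have ss : s ^+ 2 = S V by rewrite sqr_sqrtr ?S_ge0.
have hJ : k / 2 * s ^+ 2 - Phi * (n%:R * s) <= fobj V.
  rewrite /fobj /Jtot ss; apply: lerB; last exact: pairing_bound.
  by rewrite /Js -/(S V) lerDl; apply: Jb_ge0.
have hs : s <= 2 * Phi * n%:R / k.
  have h1 : k * s ^+ 2 <= 2 * Phi * n%:R * s.
    have := le_trans hJ hf; rewrite -mulrA; lra.
  rewrite ler_pdivlMr //.
  have [s_0|spos] := eqVneq s 0.
    by rewrite s_0 mul0r; apply: mulr_ge0; [apply: mulr_ge0 => //; apply: Phi_ge0|].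
  have sp : 0 < s by rewrite lt_def spos s0.
  rewrite -(ler_pM2r sp); apply: le_trans h1; rewrite expr2; lra.
move=> j; split.
  apply: le_trans (coord1 V j) _; rewrite /Mb; apply: ler_wpM2l => //.
apply: le_trans (coord2 V j) _; rewrite /Mb; apply: ler_wpM2l => //.
Qed.

Lemma Mb_ge0 : 0 < k -> 0 <= Mb.
Proof.
move=> hk; rewrite /Mb; apply: mulr_ge0 => //; apply: divr_ge0; last exact: ltW.
by apply: mulr_ge0 => //; apply: mulr_ge0 => //; apply: Phi_ge0.
Qed.

Lemma vfull0 i : vfull (toD 0) i = (0, 0).
Proof.
rewrite /vfull; case: insub => [j|] //; case: ifP => // _.
by rewrite ffunE !mxE.
Qed.

Lemma fobj0 : fobj (toD 0) = 0.
Proof.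
rewrite /fobj /Jtot /Js /Jb /pairing.
have -> : \sum_(1 <= i < n.+1) nrm2 (vsub (vfull (toD 0) i.+1) (vfull (toD 0) i)) = 0.
  by apply: big1 => i _; rewrite !vfull0 /nrm2 /dot /vsub /=; ring.
have -> : \sum_(2 <= i < n.+1) (dot (edge n c r th i) (vfull (toD 0) i.+1)
     + dot (vsub (edge n c r th i.+1) (edge n c r th i)) (vfull (toD 0) i)
     - dot (edge n c r th i.+1) (vfull (toD 0) i.-1)) ^+ 2 = 0.
  by apply: big1 => i _; rewrite !vfull0 /dot /vsub /=; ring.
have -> : \sum_(j : 'I_n.-1) dot (F j) (toD 0 j) = 0.
  by apply: big1 => i _; rewrite ffunE !mxE /dot /=; ring.
ring.
Qed.

Definition comb (a b : R) (A B : disp R n) : disp R n :=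
  [ffun j => (a * (A j).1 + b * (B j).1, a * (A j).2 + b * (B j).2)].

Lemma vfull_comb a b A B i : vfull (comb a b A B) i =
  (a * (vfull A i).1 + b * (vfull B i).1, a * (vfull A i).2 + b * (vfull B i).2).
Proof.
rewrite /vfull; case: insub => [j|]; first case: ifP => _.
- by rewrite ffunE.
- by rewrite /= !mulr0 addr0.
- by rewrite /= !mulr0 addr0.
Qed.

Notation mid A B := (comb (1/2) (1/2) A B).
Notation dif A B := (comb 1 (-1) A B).

Lemma Js_mid A B : Js k (mid A B) = (Js k A + Js k B) / 2 - Js k (dif A B) / 4.
Proof.
rewrite /Js.
rewrite (eq_bigr (fun i => (nrm2 (vsub (vfull A i.+1) (vfull A i)) + nrm2 (vsub (vfull B i.+1) (vfull B i))) / 2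
   - nrm2 (vsub (vfull (dif A B) i.+1) (vfull (dif A B) i)) / 4)); last first.
  by move=> i _; rewrite !vfull_comb /nrm2 /dot /vsub /=; field; try by rewrite ?pnatr_eq0.
rewrite sumrB -!mulr_suml big_split /=; field; try by rewrite ?pnatr_eq0.
Qed.

Lemma Jb_mid A B : Jb c r th kappa (mid A B) =
  (Jb c r th kappa A + Jb c r th kappa B) / 2 - Jb c r th kappa (dif A B) / 4.
Proof.
rewrite /Jb.
set L := fun (V : disp R n) i => dot (edge n c r th i) (vfull V i.+1)
     + dot (vsub (edge n c r th i.+1) (edge n c r th i)) (vfull V i)
     - dot (edge n c r th i.+1) (vfull V i.-1).
rewrite -!/(L _ _).
rewrite (eq_bigr (fun i => ((L A i) ^+ 2 + (L B i) ^+ 2) / 2 - (L (dif A B) i) ^+ 2 / 4)); last first.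
  by move=> i _; rewrite /L !vfull_comb /dot /vsub /=; field; try by rewrite ?pnatr_eq0.
rewrite sumrB -!mulr_suml big_split /=; field; try by rewrite ?pnatr_eq0.
Qed.

Lemma pairing_mid A B : pairing F (mid A B) = (pairing F A + pairing F B) / 2.
Proof.
rewrite /pairing -big_split mulr_suml /=; apply: eq_bigr => j _.
rewrite ffunE /dot /=; field; try by rewrite ?pnatr_eq0.
Qed.


Lemma uniq_min (U1 U2 : disp R n) : 0 < k -> 0 < kappa ->
  admissible c r th U1 -> admissible c r th U2 ->
  (forall V, admissible c r th V -> fobj U1 <= fobj V) ->
  (forall V, admissible c r th V -> fobj U2 <= fobj V) -> U1 = U2.
Proof.
move=> hk hka h1 h2 m1 m2.
have adm_mid : admissible c r th (mid U1 U2).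
  move=> i hi; rewrite vfull_comb /vadd /=.
  have := h1 i hi; have := h2 i hi; rewrite /vadd /=; lra.
have hm : fobj (mid U1 U2) = (fobj U1 + fobj U2) / 2
    - (k / 2 * S (dif U1 U2) + Jb c r th kappa (dif U1 U2)) / 4.
  rewrite /fobj /Jtot Js_mid Jb_mid pairing_mid.
  rewrite [Js k (dif _ _)]/Js -/(S _).
  by field; try by rewrite ?pnatr_eq0.
have e1 := m1 _ adm_mid; have e12 := m1 _ h2; have e21 := m2 _ h1.
have hJb := Jb_ge0 (dif U1 U2) hka.
set sD := S (dif U1 U2) in hm.
have hks : k * sD <= 0.
  move: e1; rewrite hm; lra.
have hs : sD <= 0 by rewrite -(pmulr_rle0 _ hk).
have sq : Num.sqrt sD = 0 by rewrite ler0_sqrtr.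
apply/ffunP => j.
have := coord1 (dif U1 U2) j; have := coord2 (dif U1 U2) j.
rewrite -/sD sq mulr0 !normr_le0 !ffunE /=.
case: (U1 j) => a1 a2; case: (U2 j) => b1 b2 /= /eqP e2 /eqP e1'.
congr pair; lra.
Qed.

End Model.

Theorem mainTheorem1 (R : realType) (n : nat) (c : R * R) (r th : R)
  (k kappa : R) (F : disp R n) :
  (3 <= n)%N -> 0 < r ->
  (vtx n c r th 1).2 = 0 ->
  (forall i : nat, (2 <= i <= n)%N -> 0 < (vtx n c r th i).2) ->
  0 < k -> 0 < kappa ->
  exists! U : disp R n,
    admissible c r th U /\
    forall V : disp R n, admissible c r th V ->
      Jtot c r th k kappa U - pairing F U <= Jtot c r th k kappa V - pairing F V.
Proof.
move=> hn hr hP1 hP hk hka.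
set M := @Mb R n k F.
pose lo (j : 'I_n.-1) := - (vtx n c r th j.+2).2.
pose A (i : 'I_(n.-1 + n.-1)) : set R :=
  match fintype.split i with inl j => `[-M, M]%classic | inr j => `[lo j, M]%classic end.
pose K := [set x : 'rV[R]_(n.-1 + n.-1) | forall i, A i (x ord0 i)]%classic.
have cK : compact K.
  by apply: rV_compact => i; rewrite /A; case: (fintype.split _) => j; exact: segment_compact.
have M0 : 0 <= M by exact: (@Mb_ge0 R n k F).
have lo0 j : lo j <= 0.
  rewrite /lo oppr_le0; apply: ltW; apply: hP; have := ltn_ord j; lia.
have K0 : K 0.
  move=> i; rewrite /A mxE; case: (fintype.split _) => j /=; rewrite in_itv /=.
    by rewrite M0 andbT oppr_le0.
  by rewrite M0 lo0.
have spl (j : 'I_n.-1) : fintype.split (lshift n.-1 j) = inl j by exact: (unsplitK (inl _ j)).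
have spr (j : 'I_n.-1) : fintype.split (rshift n.-1 j) = inr j by exact: (unsplitK (inr _ j)).
have cf : {within K, continuous (fun x => @fobj R n c r th k kappa F (toD R n x))}%classic.
  by apply: continuous_subspaceT; exact: cont_f.
have [x xK xmin] := compact_EVT_min (ex_intro _ 0 K0 : (K !=set0)%classic) cK cf.
have hadm : admissible c r th (toD R n x).
  move=> i /andP[hi1 hi2].
  have hj : (i - 2 < n.-1)%N by lia.
  have -> : i = (Ordinal hj).+2 by rewrite /=; lia.
  rewrite vfullj ffunE /vadd /=.
  have := (set_mem xK) (rshift _ (Ordinal hj)); rewrite /A spr /= in_itv /= /lo.
  move=> /andP[h _]; move: h; rewrite /=; lra.
have hmin : forall V, admissible c r th V -> @fobj R n c r th k kappa F (toD R n x) <= @fobj R n c r th k kappa F V.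
  move=> V hV.
  have [hle|hgt] := leP (@fobj R n c r th k kappa F V) 0.
    pose y : 'rV[R]_(n.-1 + n.-1) :=
      \row_i match fintype.split i with inl j => (V j).1 | inr j => (V j).2 end.
    have yV : toD R n y = V.
      apply/ffunP => j; rewrite !ffunE !mxE spl spr; by case: (V j).
    have yK : K y.
      have hb := @box R n c r th k kappa F V hk hka hle.
      move=> i; rewrite /A mxE; case: (fintype.split _) => j /=; rewrite in_itv /=.
        by have [/ler_normlP [h1 h2] _] := hb j; apply/andP; split => //; rewrite lerNl.
      have [_ /ler_normlP [_ h2]] := hb j; rewrite h2 andbT /lo.
      have hj2 : (2 <= j.+2 <= n)%N by have := ltn_ord j; lia.
      have := hV _ hj2; rewrite vfullj /vadd /=; lra.
    by rewrite -yV; apply: xmin; apply: mem_set.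
  apply: le_trans (xmin _ (mem_set K0)) _.
  by rewrite (@fobj0 R n c r th k kappa F); apply: ltW.
exists (toD R n x); split; first by split => //; exact: hmin.
move=> U' [hU' mU'].
by apply: (@uniq_min R n c r th k kappa F _ _ hk hka hadm hU' hmin mU').
Qed.
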